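(* For any valid packing $p$ of a finite multiset of items into a finite sequence of bins, there is a thrifty packing of those items into that sequence that uses a subset of the bins used by $p$.
   Context: Grid Scheduling setting: items have positive integer sizes; bins have positive integer sizes and form a sequence. A partial packing assigns some items to bins such that the total size of the items in each bin is at most the bin's size; a packing assigns every item. A bin is used if it receives at least one item. A (partial) packing is valid if each empty bin is smaller than every unpacked item and smaller than every item packed in a later bin. A bin in a (partial) packing is wasteful if its empty space (size minus total size of its items) is at least as large as the size of some unpacked item or of some item packed in a later bin. A (partial) packing is thrifty if it has no wasteful bin. *)

(* Defs.v *)
From mathcomp Require Import all_boot.
Set Implicit Arguments. Unset Strict Implicit. Unset Printing Implicit Defensive.

(* Items: a finite multiset of positive sizes, given as a list [items]
   (item i has size nth 0 items i).  A partial packing assigns each item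
   index either [None] (unpacked) or [Some j] (packed in bin j). *)

Definition assignment (items bins : seq nat) :=
  'I_(size items) -> option 'I_(size bins).

Definition isize (items : seq nat) (i : 'I_(size items)) : nat := nth 0 items i.
Definition bsize (bins : seq nat) (j : 'I_(size bins)) : nat := nth 0 bins j.

Definition load items bins (f : assignment items bins) (j : 'I_(size bins)) : nat :=
  \sum_(i | f i == Some j) isize i.

Definition partial_packing items bins (f : assignment items bins) : Prop :=
  forall j, load f j <= bsize j.

Definition packing items bins (f : assignment items bins) : Prop :=
  partial_packing f /\ forall i, f i != None.

Definition used items bins (f : assignment items bins) (j : 'I_(size bins)) : bool :=
  [exists i, f i == Some j].

Definition unpacked_or_later items bins (f : assignment items bins)
  (j : 'I_(size bins)) (i : 'I_(size items)) : bool :=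
  if f i is Some k then j < k else true.

Definition valid items bins (f : assignment items bins) : Prop :=
  partial_packing f /\
  forall j, ~~ used f j ->
    forall i, unpacked_or_later f j i -> bsize j < isize i.

Definition wasteful items bins (f : assignment items bins) (j : 'I_(size bins)) : Prop :=
  exists i, unpacked_or_later f j i /\ isize i <= bsize j - load f j.

Definition thrifty items bins (f : assignment items bins) : Prop :=
  partial_packing f /\ forall j, ~ wasteful f j.

(* Main.v *)
Require Import Defs.
From mathcomp Require Import all_boot.
From Stdlib Require Import Classical.
From mathcomp Require Import zify.

Set Implicit Arguments. Unset Strict Implicit. Unset Printing Implicit Defensive.

Definition oval n (o : option 'I_n) : nat := if o is Some k then val k else 0.

Definition pot items bins (q : assignment items bins) : nat :=
  \sum_(x : 'I_(size items)) oval (q x).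

Definition upd items bins (q : assignment items bins) i j : assignment items bins :=
  fun x => if x == i then Some j else q x.

Lemma load_upd items bins (q : assignment items bins) i j k j' :
  q i = Some k -> k != j ->
  load (upd q i j) j' <= (j' == j) * isize i + load q j'.
Proof.
move=> qi kj; rewrite /load !(big_mkcond (fun x => _ == _)) /=.
apply: (@leq_trans (\sum_x ((x == i) * ((j' == j) * isize i) +
   (if q x == Some j' then isize x else 0)))).
  apply: leq_sum => x _; rewrite /upd.
  case: (eqVneq x i) => [->|xi] /=.
    case: (eqVneq j j') => [<-|]; first by rewrite !eqxx /= !mul1n leq_addr.
    move=> H; have -> : (Some j == Some j') = false by apply/eqP => -[E]; rewrite E eqxx in H.
    by rewrite add0n leq0n.
  by rewrite mul0n add0n.
rewrite big_split /= leq_add2r.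
rewrite (bigD1 i) //= eqxx mul1n big1 ?addn0 // => x /negbTE ->.
by rewrite mul0n.
Qed.

Lemma pot_upd items bins (q : assignment items bins) i (j : 'I_(size bins)) k :
  q i = Some k -> j < k -> pot (upd q i j) < pot q.
Proof.
move=> qi jk; rewrite /pot (bigD1 i) //= [X in _ < X](bigD1 i) //=.
rewrite /upd eqxx qi /=.
rewrite (eq_bigr (fun x => oval (q x))); last by move=> x /negbTE ->.
by rewrite ltn_add2r.
Qed.

Definition inv items bins (p q : assignment items bins) :=
  packing q /\ (forall x j, unpacked_or_later q j x -> unpacked_or_later p j x)
  /\ (forall j, used q j -> used p j).

Theorem lemma2 (items bins : seq nat)
  (items_pos : all (fun s => 0 < s) items) (bins_pos : all (fun s => 0 < s) bins)
  (p : assignment items bins) :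
  packing p -> valid p ->
  exists q : assignment items bins,
    packing q /\ thrifty q /\ (forall j, used q j -> used p j).
Proof.
move=> pp [_ vp].
suff H : forall n q, pot q <= n -> inv p q ->
  exists q : assignment items bins,
    packing q /\ thrifty q /\ (forall j, used q j -> used p j).
  by apply: (H (pot p) p) => //; split => //.
elim=> [|n IH] q.
all: move=> Hn [[pq allq] [uq usq]].
all: case: (classic (forall j, ~ wasteful q j)) => [nw|].
1,3: by exists q; split => //; split => //; case: pq.
all: move=> /not_all_not_ex [j [i [ui Hi]]].
all: move: (allq i) ui; rewrite /unpacked_or_later; case qi: (q i) => [k|] //= _ jk.
all: have Hlt := pot_upd qi jk.
1: by move: Hn; rewrite leqn0 => /eqP E; rewrite E in Hlt.
apply: (IH (upd q i j)); first by lia.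
have kj : k != j by rewrite neq_ltn jk orbT.
split; [split|split].
- move=> j'; have := load_upd j' qi kj; have := pq j'; have := pq j.
  case: (eqVneq j' j) => [->|_] /=; lia.
- by move=> x; rewrite /upd; case: (x == i).
- move=> x j0; rewrite /unpacked_or_later /upd; case: (eqVneq x i) => [->|_]; last exact: uq.
  move=> /= j0j; apply: uq; rewrite /unpacked_or_later qi /=; exact: ltn_trans j0j jk.
- move=> j' /existsP [x]; rewrite /upd; case: (eqVneq x i) => [_|_] Hx.
  + move/eqP: Hx => [<-]; case uj: (used p j) => //.
    have := vp j (negbT uj) i (uq i j _); rewrite /unpacked_or_later qi /= => /(_ jk).
    have := pq j; lia.
  + by apply: usq; apply/existsP; exists x.
Qed.
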